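(* Let $\Delta_{1,1}=\{A=(a_{ij})\in SL_3(\mathfrak{o}) : a_{21}a_{32}-a_{22}a_{31}\neq0\}$. Then $$\Delta_{1,1}=\bigsqcup_{\substack{y_1,y_2,y_3\in Y(\mathfrak{o})\\ y_2,y_3\neq I_2}}\ \bigsqcup_{d\in D(3)}\ \bigsqcup_{u\in U(3)} \varphi_2(y_1^{-1})\,\varphi_1(y_2^{-1})\,\varphi_2(y_3^{-1})\,d\,u\,\Gamma_\infty(3),$$ i.e. $\Delta_{1,1}$ is the union of these sets and they are pairwise disjoint for distinct tuples $(y_1,y_2,y_3,d,u)$.
   Context: Let $\omega=e^{2\pi i/3}$, $\mathfrak{o}=\mathbb{Z}[\omega]$, $\mathfrak{o}^\times$ its unit group. Fix representatives of nonzero elements modulo units (''$c\in(\mathfrak{o}-\{0\})/\mathfrak{o}^\times$'') and, for each nonzero $c$, representatives of $\mathfrak{o}/c\mathfrak{o}$ (''$a\in\mathfrak{o}/c\mathfrak{o}$''). $Y(\mathfrak{o})=\{\begin{pmatrix}a&b\\c&d\end{pmatrix}\in SL_2(\mathfrak{o}) : c\in(\mathfrak{o}-\{0\})/\mathfrak{o}^\times,\ a\in\mathfrak{o}/c\mathfrak{o}\}\cup\{I_2\}$. $\Gamma(3)=\{A\in SL_3(\mathfrak{o}):A\equiv I_3\pmod{3\mathfrak{o}}\}$ (entrywise), $\Gamma_\infty(3)$ its subgroup of upper triangular unipotent matrices. $D(3)$: diagonal $\mathrm{diag}(i,j,k)$ with $i,j,k\in\mathfrak{o}$, $ijk=1$.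 $U(3)$: matrices $\begin{pmatrix}1&\alpha&\beta\\&1&\gamma\\&&1\end{pmatrix}$ with $\alpha,\beta,\gamma\in\{0,1,2\}+\{0,1,2\}\omega$. For $y=\begin{pmatrix}a&b\\c&d\end{pmatrix}\in SL_2(\mathfrak{o})$, $\varphi_1(y)=\begin{pmatrix}a&b&0\\c&d&0\\0&0&1\end{pmatrix}$, $\varphi_2(y)=\begin{pmatrix}1&0&0\\0&a&b\\0&c&d\end{pmatrix}$. *)

(* Defs.v *)
(* the Eisenstein integers o = Z[omega] realized inside algC. *)
From HB Require Import structures.
From mathcomp Require Import all_boot all_order all_algebra all_field.
Set Implicit Arguments. Unset Strict Implicit. Unset Printing Implicit Defensive.
Import Order.TTheory GRing.Theory Num.Theory.
Local Open Scope ring_scope.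

(* omega = e^{2 pi i/3} = (-1 + i sqrt 3)/2 *)
Definition omega : algC := (-1 + 'i * sqrtC 3) / 2.

Definition inO (x : algC) : Prop := exists a b : int, x = a%:~R + b%:~R * omega.

Definition unitO (x : algC) : Prop := inO x /\ x != 0 /\ inO x^-1.

Definition assocO (x y : algC) : Prop := exists u, unitO u /\ x = u * y.

Definition congO (c x y : algC) : Prop := exists k, inO k /\ x - y = k * c.

Definition reps_units (Rc : algC -> Prop) : Prop :=
  (forall c, Rc c -> inO c /\ c != 0) /\
  (forall x, inO x -> x != 0 -> exists c, Rc c /\ assocO x c /\
      forall c', Rc c' -> assocO x c' -> c' = c).

Definition reps_mod (Rc : algC -> Prop) (Ra : algC -> algC -> Prop) : Prop :=
  forall c, Rc c ->
    (forall a, Ra c a -> inO a) /\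
    (forall x, inO x -> exists a, Ra c a /\ congO c x a /\
        forall a', Ra c a' -> congO c x a' -> a' = a).

Definition o0 : 'I_3 := @Ordinal 3 0 isT.
Definition o1 : 'I_3 := @Ordinal 3 1 isT.
Definition o2 : 'I_3 := @Ordinal 3 2 isT.
Definition p0 : 'I_2 := @Ordinal 2 0 isT.
Definition p1 : 'I_2 := @Ordinal 2 1 isT.

Definition SLO (n : nat) (A : 'M[algC]_n) : Prop :=
  (forall i j, inO (A i j)) /\ \det A = 1.

Definition Yset (Rc : algC -> Prop) (Ra : algC -> algC -> Prop)
  (y : 'M[algC]_2) : Prop :=
  (SLO y /\ Rc (y p1 p0) /\ Ra (y p1 p0) (y p0 p0)) \/ y = 1%:M.

Definition D3 (d : 'M[algC]_3) : Prop :=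
  exists i j k, inO i /\ inO j /\ inO k /\ i * j * k = 1 /\
    d = diag_mx (\row_(l < 3) [:: i; j; k]`_l).

Definition digit3 (x : algC) : Prop :=
  exists a b : 'I_3, x = (a : nat)%:R + (b : nat)%:R * omega.

Definition U3 (u : 'M[algC]_3) : Prop :=
  exists al be ga, digit3 al /\ digit3 be /\ digit3 ga /\
    u = \matrix_(i < 3, j < 3)
          (if i == j then 1 else
           if (i == o0) && (j == o1) then al else
           if (i == o0) && (j == o2) then be else
           if (i == o1) && (j == o2) then ga else 0).

Definition Gamma3 (A : 'M[algC]_3) : Prop :=
  SLO A /\ forall i j : 'I_3, congO 3 (A i j) ((i == j)%:R).

Definition Gamma_inf3 (A : 'M[algC]_3) : Prop :=
  Gamma3 A /\ (forall i : 'I_3, A i i = 1) /\ (forall i j : 'I_3, (j < i)%N -> A i j = 0).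

Definition phi1 (y : 'M[algC]_2) : 'M[algC]_3 :=
  \matrix_(i < 3, j < 3)
    (if ((i < 2)%N && (j < 2)%N) then y (inord i) (inord j) else (i == j)%:R).

Definition phi2 (y : 'M[algC]_2) : 'M[algC]_3 :=
  \matrix_(i < 3, j < 3)
    (if ((0 < i)%N && (0 < j)%N) then y (inord i.-1) (inord j.-1) else (i == j)%:R).

Definition Delta11 (A : 'M[algC]_3) : Prop :=
  SLO A /\ A o1 o0 * A o2 o1 - A o1 o1 * A o2 o0 != 0.

Definition cell (y1 y2 y3 : 'M[algC]_2) (d u : 'M[algC]_3) (A : 'M[algC]_3) : Prop :=
  exists g, Gamma_inf3 g /\
    A = phi2 (invmx y1) *m phi1 (invmx y2) *m phi2 (invmx y3) *m d *m u *m g.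

Definition index_ok Rc Ra (y1 y2 y3 : 'M[algC]_2) (d u : 'M[algC]_3) : Prop :=
  Yset Rc Ra y1 /\ Yset Rc Ra y2 /\ Yset Rc Ra y3 /\
  y2 != 1%:M /\ y3 != 1%:M /\ D3 d /\ U3 u.

(* Main.v *)
Require Import Defs.
From HB Require Import structures.
From mathcomp Require Import all_boot all_order all_algebra all_field.
From mathcomp Require Import ring lra zify.
Import Order.TTheory GRing.Theory Num.Theory.
Local Open Scope ring_scope.

Lemma omega2 : omega * omega = -1 - omega.
Proof.
rewrite /omega.
have h3 : sqrtC 3 * sqrtC 3 = 3 :> algC by rewrite -expr2 sqrtCK.
have hi : 'i * 'i = -1 :> algC by rewrite -expr2 sqrCi.
set s := sqrtC 3 in h3 *.
set i := 'i in hi *.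
have -> : (-1 + i * s) / 2 * ((-1 + i * s) / 2) = (1 - 2 * i * s + (i*i)*(s*s)) / 4 by field.
rewrite h3 hi. by field.
Qed.

Definition emb (a b : int) : algC := a%:~R + b%:~R * omega.

Lemma emb_mul a b c d : emb a b * emb c d = emb (a*c - b*d) (a*d + b*c - b*d).
Proof.
rewrite /emb; apply/eqP; rewrite -subr_eq0.
have -> : (a%:~R + b%:~R * omega) * (c%:~R + d%:~R * omega) -
  ((a * c - b * d)%:~R + (a * d + b * c - b * d)%:~R * omega) =
  (b*d)%:~R * (omega * omega - (-1 - omega)) :> algC by ring.
by rewrite omega2 subrr mulr0.
Qed.

Lemma emb_add a b c d : emb a b + emb c d = emb (a + c) (b + d).
Proof. rewrite /emb; ring. Qed.
Lemma emb_opp a b : - emb a b = emb (-a) (-b).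
Proof. rewrite /emb; ring. Qed.

Lemma inO_emb a b : inO (emb a b).
Proof. by exists a, b. Qed.

Lemma inOE x : inO x -> exists a b, x = emb a b.
Proof. by []. Qed.

Lemma inO_int (a : int) : inO a%:~R.
Proof. exists a, 0; rewrite mul0r addr0 //. Qed.
Lemma inO0 : inO 0. Proof. by have := inO_int 0; rewrite mulr0z. Qed.
Lemma inO1 : inO 1. Proof. by have := inO_int 1. Qed.
Lemma inO_omega : inO omega.
Proof. exists 0, 1; rewrite /= mul1r add0r //. Qed.
Lemma inO_nat (n : nat) : inO n%:R.
Proof. by have := inO_int n. Qed.

Lemma inOD x y : inO x -> inO y -> inO (x + y).
Proof. move=> [a [b ->]] [c [d ->]]; rewrite -/(emb a b) -/(emb c d) emb_add; exact: inO_emb. Qed.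
Lemma inON x : inO x -> inO (- x).
Proof. move=> [a [b ->]]; rewrite -/(emb a b) emb_opp; exact: inO_emb. Qed.
Lemma inOB x y : inO x -> inO y -> inO (x - y).
Proof. by move=> hx hy; apply: inOD => //; apply: inON. Qed.
Lemma inOM x y : inO x -> inO y -> inO (x * y).
Proof. move=> [a [b ->]] [c [d ->]]; rewrite -/(emb a b) -/(emb c d) emb_mul; exact: inO_emb. Qed.

Lemma inO_sum (I : finType) (F : I -> algC) : (forall i, inO (F i)) -> inO (\sum_i F i).
Proof. move=> h; apply: (big_ind inO) => //; [exact: inO0 | exact: inOD]. Qed.

Definition nrm (a b : int) : int := a*a - a*b + b*b.

Lemma nrm_ge0 a b : 0 <= nrm a b.
Proof. rewrite /nrm; nia. Qed.

Lemma nrm_eq0 a b : nrm a b = 0 -> emb a b = 0.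
Proof.
rewrite /nrm => h.
have [-> ->] : a = 0 /\ b = 0 by nia.
by rewrite /emb !mul0r addr0.
Qed.

Lemma round_int (m N : int) : 0 < N -> exists q e, m = q * N + e /\ - N <= 2 * e <= N.
Proof.
move=> hN.
have h2N : (2 * N != 0)%R by lia.
have h2N' : (0 < 2 * N)%R by lia.
set k := (2 * m + N)%R.
have E := divz_eq k (2 * N).
have G := modz_ge0 k h2N.
have L := ltz_pmod k h2N'.
set q := (k %/ (2 * N))%Z in E G L *.
set r := (k %% (2 * N))%Z in E G L *.
exists q, (m - q * N); split; first ring.
rewrite /k in E; lia.
Qed.

Lemma euclid_int (x1 x2 y1 y2 : int) : 0 < nrm y1 y2 ->
  exists q1 q2, nrm (x1 - (q1*y1 - q2*y2)) (x2 - (q1*y2 + q2*y1 - q2*y2)) < nrm y1 y2.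
Proof.
move=> hN.
have [q1 [e1 [E1 B1]]] := @round_int (x1 * (y1 - y2) + x2 * y2) _ hN.
have [q2 [e2 [E2 B2]]] := @round_int (x2 * y1 - x1 * y2) _ hN.
exists q1, q2.
set r1 := x1 - (q1*y1 - q2*y2).
set r2 := x2 - (q1*y2 + q2*y1 - q2*y2).
set N := nrm y1 y2 in hN B1 B2 E1 E2 *.
have C1 : r1 * (y1 - y2) + r2 * y2 = e1.
  rewrite /r1 /r2; have -> : e1 = x1 * (y1 - y2) + x2 * y2 - q1 * N by rewrite E1; ring.
  rewrite /N /nrm; ring.
have C2 : r2 * y1 - r1 * y2 = e2.
  rewrite /r1 /r2; have -> : e2 = x2 * y1 - x1 * y2 - q2 * N by rewrite E2; ring.
  rewrite /N /nrm; ring.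
have M : nrm e1 e2 = nrm r1 r2 * N.
  rewrite -C1 -C2 /N /nrm; ring.
have H4 : 4 * nrm e1 e2 <= 3 * N * N.
  rewrite /nrm; nia.
have := nrm_ge0 r1 r2.
nia.
Qed.

Lemma euclidO x y1 y2 : inO x -> 0 < nrm y1 y2 ->
  exists k r1 r2, inO k /\ x = k * emb y1 y2 + emb r1 r2 /\ nrm r1 r2 < nrm y1 y2.
Proof.
move=> [x1 [x2 ->]] hN.
have [q1 [q2 H]] := @euclid_int x1 x2 _ _ hN.
exists (emb q1 q2), (x1 - (q1 * y1 - q2 * y2)), (x2 - (q1 * y2 + q2 * y1 - q2 * y2)); split; first exact: inO_emb.
split; last exact: H.
rewrite emb_mul emb_add; congr emb; ring.
Qed.

Definition bez_concl (p q : algC) :=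
  exists g s t p' q', [/\ inO g, inO s, inO t, inO p' & inO q'] /\
    g = s * p + t * q /\ p = g * p' /\ q = g * q'.

Lemma bezout p q : inO p -> inO q -> bez_concl p q.
Proof.
move=> hp [a [b ->]].
suff H : forall n : nat, forall p a b, inO p -> (`|nrm a b| <= n)%N -> bez_concl p (emb a b).
  exact: (H _ _ _ _ hp (leqnn _)).
clear hp; elim=> [|n IH] {}p {}a {}b hp hn.
  have Z : nrm a b = 0 by lia.
  rewrite (@nrm_eq0 a b Z).
  exists p, 1, 0, 1, 0; split; first by split; [exact: hp|exact: inO1|exact: inO0|exact: inO1|exact: inO0].
  by split; [ring | split; ring].
have [Z|NZ] := eqVneq (nrm a b) 0.
  rewrite (@nrm_eq0 a b Z).
  exists p, 1, 0, 1, 0; split; first by split; [exact: hp|exact: inO1|exact: inO0|exact: inO1|exact: inO0].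
  by split; [ring | split; ring].
have hN : 0 < nrm a b by have := nrm_ge0 a b; lia.
have [k [r1 [r2 [hk [E L]]]]] := @euclidO _ a b hp hN.
have [g [s [t [p' [q' [[hg hs ht hp' hq'] [Eg [Ep Eq]]]]]]]] :=
  IH (emb a b) r1 r2 (inO_emb a b) (ltac:(have := nrm_ge0 r1 r2; lia)).
exists g, t, (s - t * k), (k * p' + q'), p'.
split; first split => //.
- by apply: inOB => //; apply: inOM.
- by apply: inOD => //; apply: inOM.
split; last split.
- rewrite Eg E; ring.
- rewrite E {1}Eq Ep; ring.
- exact: Ep.
Qed.

Lemma ord3P (i : 'I_3) : [\/ i = o0, i = o1 | i = o2].
Proof.
case: i => [[|[|[|k]]] h].
- by apply: Or31; apply: val_inj.
- by apply: Or32; apply: val_inj.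
- by apply: Or33; apply: val_inj.
- by [].
Qed.
Lemma ord2P (i : 'I_2) : i = p0 \/ i = p1.
Proof.
case: i => [[|[|k]] h].
- by left; apply: val_inj.
- by right; apply: val_inj.
- by [].
Qed.

Lemma sum3 (F : 'I_3 -> algC) : \sum_i F i = F o0 + F o1 + F o2.
Proof.
rewrite !big_ord_recl big_ord0 addr0 addrA.
by congr (F _ + F _ + F _); apply: val_inj.
Qed.
Lemma sum2 (F : 'I_2 -> algC) : \sum_i F i = F p0 + F p1.
Proof.
rewrite !big_ord_recl big_ord0 addr0.
by congr (F _ + F _); apply: val_inj.
Qed.

Lemma inord0 : (inord 0 : 'I_2) = p0. Proof. by apply: val_inj; rewrite /= inordK. Qed.
Lemma inord1 : (inord 1 : 'I_2) = p1. Proof. by apply: val_inj; rewrite /= inordK. Qed.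

Definition minor (X : 'M[algC]_3) := X o1 o0 * X o2 o1 - X o1 o1 * X o2 o0.

Lemma det2 (y : 'M[algC]_2) : \det y = y p0 p0 * y p1 p1 - y p0 p1 * y p1 p0.
Proof.
rewrite (expand_det_row _ p0) sum2 /cofactor !det_mx11 !mxE /=.
have -> : lift p0 0 = p1 by apply: val_inj.
have -> : lift p1 0 = p0 by apply: val_inj.
rewrite expr0 expr1; ring.
Qed.

Lemma det3 (X : 'M[algC]_3) : \det X =
  X o0 o0 * (X o1 o1 * X o2 o2 - X o1 o2 * X o2 o1)
  - X o0 o1 * (X o1 o0 * X o2 o2 - X o1 o2 * X o2 o0)
  + X o0 o2 * (X o1 o0 * X o2 o1 - X o1 o1 * X o2 o0).
Proof.
rewrite (expand_det_row _ o0) sum3 /cofactor !det2 !mxE /=.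
have -> : lift o0 p0 = o1 by apply: val_inj.
have -> : lift o0 p1 = o2 by apply: val_inj.
have -> : lift o1 p0 = o0 by apply: val_inj.
have -> : lift o1 p1 = o2 by apply: val_inj.
have -> : lift o2 p0 = o0 by apply: val_inj.
have -> : lift o2 p1 = o1 by apply: val_inj.
rewrite expr0 expr1 expr2; ring.
Qed.

Lemma minor_phi2 y X : minor (phi2 y *m X) = \det y * minor X.
Proof.
rewrite /minor !mxE !sum3 !mxE /= inord0 inord1 det2; ring.
Qed.

Ltac ent3 := apply/matrixP;
  do 2 (let k := fresh "k" in move=> k; case: (ord3P k) => ->);
  rewrite !mxE ?sum3 ?sum2 ?mxE /= ?inord0 ?inord1.

Lemma phi1M x y : phi1 (x *m y) = phi1 x *m phi1 y.
Proof. by ent3; ring. Qed.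
Lemma phi2M x y : phi2 (x *m y) = phi2 x *m phi2 y.
Proof. by ent3; ring. Qed.
Lemma phi1_1 : phi1 1%:M = 1%:M.
Proof. by ent3. Qed.
Lemma phi2_1 : phi2 1%:M = 1%:M.
Proof. by ent3. Qed.
Lemma det_phi1 y : \det (phi1 y) = \det y.
Proof. rewrite det3 det2 !mxE /= ?inord0 ?inord1; ring. Qed.
Lemma det_phi2 y : \det (phi2 y) = \det y.
Proof. rewrite det3 det2 !mxE /= ?inord0 ?inord1; ring. Qed.

Lemma SLO_mul n (A B : 'M[algC]_n) : SLO A -> SLO B -> SLO (A *m B).
Proof.
move=> [hA dA] [hB dB]; split; last by rewrite det_mulmx dA dB mulr1.
move=> i j; rewrite mxE; apply: inO_sum => k; exact: inOM.
Qed.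
Lemma SLO_1 n : SLO (1%:M : 'M[algC]_n).
Proof. split; last exact: det1. move=> i j; rewrite mxE; exact: inO_nat. Qed.
Lemma SLO_phi1 y : SLO y -> SLO (phi1 y).
Proof.
move=> [hy dy]; split; last by rewrite det_phi1.
move=> i j; rewrite mxE; case: ifP => _; [exact: hy | exact: inO_nat].
Qed.
Lemma SLO_phi2 y : SLO y -> SLO (phi2 y).
Proof.
move=> [hy dy]; split; last by rewrite det_phi2.
move=> i j; rewrite mxE; case: ifP => _; [exact: hy | exact: inO_nat].
Qed.

Definition mx2 (a b c d : algC) : 'M[algC]_2 :=
  \matrix_(i < 2, j < 2) (if i == p0 then (if j == p0 then a else b) else (if j == p0 then c else d)).

Ltac ent2 := apply/matrixP;
  do 2 (let k := fresh "k" in move=> k; case: (ord2P k) => ->);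
  rewrite ?mxE ?sum2 ?mxE /=.

Lemma det_mx2 a b c d : \det (mx2 a b c d) = a * d - b * c.
Proof. by rewrite det2 !mxE. Qed.

Lemma unit_SLO n (y : 'M[algC]_n) : SLO y -> y \in unitmx.
Proof. by move=> [_ d]; rewrite unitmxE d unitr1. Qed.

Lemma mulVSLO n (y : 'M[algC]_n) : SLO y -> invmx y *m y = 1%:M.
Proof. by move=> h; rewrite mulVmx // unit_SLO. Qed.
Lemma mulSLOV n (y : 'M[algC]_n) : SLO y -> y *m invmx y = 1%:M.
Proof. by move=> h; rewrite mulmxV // unit_SLO. Qed.

Lemma inv2 y : \det y = 1 -> invmx y = mx2 (y p1 p1) (- y p0 p1) (- y p1 p0) (y p0 p0).
Proof.
move=> d.
have U : y \in unitmx by rewrite unitmxE d unitr1.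
have E : mx2 (y p1 p1) (- y p0 p1) (- y p1 p0) (y p0 p0) *m y = 1%:M.
  move: d; rewrite det2 => d.
  by ent2; rewrite -?d; ring.
by rewrite -[invmx y]mul1mx -E -mulmxA mulmxV // mulmx1.
Qed.

Lemma SLO_inv2 (y : 'M[algC]_2) : SLO y -> SLO (invmx y).
Proof.
move=> [hy dy]; rewrite inv2 //; split.
  move=> i j; case: (ord2P i) => ->; case: (ord2P j) => ->; rewrite !mxE /=;
    by [apply: hy | apply: inON].
by rewrite det_mx2 -dy det2; ring.
Qed.

Lemma SLO_Y Rc Ra y : Yset Rc Ra y -> SLO y.
Proof. by case=> [[h _] | ->]; [| exact: SLO_1]. Qed.

Lemma Rc_ne0 Rc Ra y : reps_units Rc -> Yset Rc Ra y -> y != 1%:M -> y p1 p0 != 0.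
Proof. by move=> [HU _]; case=> [[_ [h _]] | ->]; [move=> _; case: (HU _ h) | rewrite eqxx]. Qed.

Lemma Y_uniq Rc Ra y y' : reps_units Rc -> reps_mod Rc Ra ->
  Yset Rc Ra y -> Yset Rc Ra y' -> (y' *m invmx y) p1 p0 = 0 -> y = y'.
Proof.
move=> HU HM Y Y' H0.
have S := SLO_Y _ _ _ Y; have S' := SLO_Y _ _ _ Y'.
set M := y' *m invmx y in H0.
have SM : SLO M by apply: SLO_mul => //; apply: SLO_inv2.
have EM : y' = M *m y by rewrite /M -mulmxA mulVSLO // mulmx1.
have dM : M p0 p0 * M p1 p1 = 1.
  by case: SM => _; rewrite det2 H0 mulr0 subr0.
have E10 : y' p1 p0 = M p1 p1 * y p1 p0 by rewrite EM mxE sum2 H0 mul0r add0r.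
have E11 : y' p1 p1 = M p1 p1 * y p1 p1 by rewrite EM mxE sum2 H0 mul0r add0r.
have E00 : y' p0 p0 = M p0 p0 * y p0 p0 + M p0 p1 * y p1 p0 by rewrite EM mxE sum2.
have E01 : y' p0 p1 = M p0 p0 * y p0 p1 + M p0 p1 * y p1 p1 by rewrite EM mxE sum2.
have M11n0 : M p1 p1 != 0 by apply/eqP => h; move: dM; rewrite h mulr0 => /eqP; rewrite eq_sym oner_eq0.
case: Y => [[_ [Rc1 Ra1]] | Y1]; last first.
  case: Y' => [[_ [Rc1' _]] | ->]; last exact: Y1.
  have z : y p1 p0 = 0 by rewrite Y1 mxE.
  move: Rc1'; rewrite E10 z mulr0 => h.
  by case: HU => H _; case: (H _ h) => _; rewrite eqxx.
case: Y' => [[_ [Rc1' Ra1']] | Y1'].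
- set c := y p1 p0 in Rc1 Ra1 E10 E00 *.
  have [Oc cn0] := HU.1 _ Rc1.
  have [Oc' cn0'] := HU.1 _ Rc1'.
  have hcc : y' p1 p0 = c.
    have [c0 [_ [_ U]]] := HU.2 _ Oc' cn0'.
    rewrite (U (y' p1 p0) Rc1'); last by exists 1; split; [split; [exact: inO1 | split; [exact: oner_neq0 | rewrite invr1; exact: inO1]] | rewrite mul1r].
    apply/esym/U => //; exists (M p1 p1); split => //.
    split; first by case: SM => h _; exact: h.
    split => //.
    have -> : (M p1 p1)^-1 = M p0 p0.
      by apply: (mulIf M11n0); rewrite mulVf // dM.
    by case: SM => h _; exact: h.
  have m11 : M p1 p1 = 1.
    by apply: (mulIf cn0); rewrite mul1r -E10 hcc.
  have m00 : M p0 p0 = 1 by move: dM; rewrite m11 mulr1.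
  have Om01 : inO (M p0 p1) by case: SM => h _; exact: h.
  have haa : y' p0 p0 = y p0 p0.
    move: Ra1'; rewrite hcc => Ra1'.
    have [_ Ua] := HM _ Rc1.
    have [a [_ [_ U]]] := Ua _ (S.1 p0 p0).
    rewrite (U _ Ra1); last by exists 0; split; [exact: inO0 | rewrite mul0r subrr].
    apply: U => //; exists (- M p0 p1); split; first exact: inON.
    rewrite E00 m00; ring.
  have m01 : M p0 p1 = 0.
    have e : M p0 p1 * c = y' p0 p0 - y p0 p0 by rewrite E00 m00; ring.
    by apply: (mulIf cn0); rewrite mul0r e haa subrr.
  by ent2; rewrite ?E00 ?E01 ?E10 ?E11 ?m11 ?m00 ?m01 ?hcc /c; ring.
- exfalso; move: E10; rewrite Y1' mxE /= => /esym/eqP; rewrite mulf_eq0 (negbTE M11n0) /=.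
  by case: (HU.1 _ Rc1) => _ /negbTE ->.
Qed.

Lemma exists_y Rc Ra p q : reps_units Rc -> reps_mod Rc Ra -> inO p -> inO q ->
  exists y, Yset Rc Ra y /\ y p1 p0 * p + y p1 p1 * q = 0 /\ (q != 0 -> y != 1%:M).
Proof.
move=> HU HM Op Oq.
have [->|qn0] := eqVneq q 0.
  exists 1%:M; split; first by right.
  by split; [rewrite !mxE /= mul0r mulr0 addr0 | rewrite eqxx].
have [g [s [t [p' [q' [[Og Os Ot Op' Oq'] [Eg [Ep Eq]]]]]]]] := @bezout p q Op Oq.
have gn0 : g != 0 by apply: contraNneq qn0 => h; rewrite Eq h mul0r.
have q'n0 : q' != 0 by apply: contraNneq qn0 => h; rewrite Eq h mulr0.
have B1 : s * p' + t * q' = 1.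
  apply: (mulfI gn0); rewrite mulr1 {2}Eg Ep Eq; ring.
have [c [Rc1 [[mu [[Omu [mun0 Omui]] Eq']] _]]] := HU.2 _ Oq' q'n0.
have [Oc cn0] := HU.1 _ Rc1.
set d := - p' * mu^-1.
set a0 := - s * mu.
set b0 := - t * mu.
have Od : inO d by apply: inOM => //; apply: inON.
have Oa0 : inO a0 by apply: inOM => //; apply: inON.
have Ob0 : inO b0 by apply: inOM => //; apply: inON.
have D0 : a0 * d - b0 * c = 1.
  rewrite /a0 /d /b0 -B1 Eq'.
  have : mu * mu^-1 = 1 by rewrite mulfV.
  move=> h; rewrite -[s * p']mulr1 -h; ring.
have [Ora Ua] := HM _ Rc1.
have [a [Raa [[k [Ok Ek]] _]]] := Ua _ Oa0.
set b := b0 - k * d.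
exists (mx2 a b c d).
split; first left.
  split; last by rewrite !mxE /=.
  split.
    move=> i j; case: (ord2P i) => ->; case: (ord2P j) => ->; rewrite !mxE /=.
    + exact: Ora.
    + by apply: inOB => //; apply: inOM.
    + exact: Oc.
    + exact: Od.
  rewrite det_mx2 /b -D0.
  have -> : a = a0 - k * c by rewrite -Ek; ring.
  ring.
split; last by move=> _; apply/eqP => /matrixP /(_ p1 p0); rewrite !mxE /=; apply/eqP.
rewrite !mxE /= /d Ep Eq Eq'.
have : mu * mu^-1 = 1 by rewrite mulfV.
move=> h; rewrite -[c * (g * p')]mulr1 -h; ring.
Qed.

Lemma emb_eq0 m n : emb m n = 0 -> m = 0 /\ n = 0.
Proof.
rewrite /emb => h.
have em : m%:~R = - (n%:~R * omega) :> algC by apply/eqP; rewrite -subr_eq0 opprK; apply/eqP.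
have hN : (nrm m n)%:~R = 0 :> algC.
  rewrite /nrm !rmorphD !rmorphN !rmorphM /= em.
  have -> : - (n%:~R * omega) * - (n%:~R * omega) - - (n%:~R * omega) * n%:~R + n%:~R * n%:~R
     = (n%:~R * n%:~R) * (omega * omega - (-1 - omega)) :> algC by ring.
  by rewrite omega2 subrr mulr0.
move/eqP: hN; rewrite intr_eq0 /nrm => /eqP hN.
split; nia.
Qed.

Lemma cong3_emb a b x : congO 3 (emb a b) x -> exists c d, x = emb (a - 3 * c) (b - 3 * d).
Proof.
move=> [k [[c [d ->]] E]]; exists c, d.
have -> : x = emb a b - emb c d * 3 by rewrite -E; ring.
rewrite /emb !rmorphB !rmorphM /=; ring.
Qed.

Lemma digit3E x : digit3 x -> exists a b : int, x = emb a b /\ 0 <= a < 3 /\ 0 <= b < 3.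
Proof.
move=> [a [b ->]]; exists (a : nat)%:Z, (b : nat)%:Z; split; first by rewrite /emb !pmulrn.
by have := ltn_ord a; have := ltn_ord b; lia.
Qed.

Lemma digit_uniq x y : digit3 x -> digit3 y -> congO 3 x y -> x = y.
Proof.
move=> /digit3E [a [b [-> Ba]]] /digit3E [a' [b' [-> Bb]]] /cong3_emb [c [d E]].
have : emb (a' - (a - 3 * c)) (b' - (b - 3 * d)) = 0.
  by rewrite -emb_add -emb_opp E subrr.
move=> /emb_eq0 [h1 h2].
have [-> ->] : a = a' /\ b = b' by lia.
by [].
Qed.

Lemma digit_exists x : inO x -> exists al, digit3 al /\ congO 3 x al.
Proof.
move=> [a [b ->]].
have h3 : (3 != 0 :> int) by [].
have Ga := modz_ge0 a h3; have La := ltz_pmod a (isT : (0 < 3 :> int)).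
have Gb := modz_ge0 b h3; have Lb := ltz_pmod b (isT : (0 < 3 :> int)).
have La' : (`|(a %% 3)%Z| < 3)%N by lia.
have Lb' : (`|(b %% 3)%Z| < 3)%N by lia.
exists (emb (a %% 3)%Z (b %% 3)%Z); split.
  by exists (Ordinal La'), (Ordinal Lb'); rewrite /emb /= !natr_absz !ger0_norm.
exists (emb (a %/ 3)%Z (b %/ 3)%Z); split; first exact: inO_emb.
rewrite {1}(divz_eq a 3) {1}(divz_eq b 3) /emb !rmorphD !rmorphM /=; ring.
Qed.

Definition ut (x y z : algC) : 'M[algC]_3 := \matrix_(i < 3, j < 3)
          (if i == j then 1 else
           if (i == o0) && (j == o1) then x else
           if (i == o0) && (j == o2) then y else
           if (i == o1) && (j == o2) then z else 0).

Definition dg (a b c : algC) : 'M[algC]_3 := diag_mx (\row_(l < 3) [:: a; b; c]`_l).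

Lemma ut_mul x y z x' y' z' : ut x y z *m ut x' y' z' = ut (x + x') (y + x * z' + y') (z + z').
Proof. by ent3; ring. Qed.

Lemma dg_mul a b c X : dg a b c *m X = \matrix_(i < 3, j < 3) ([:: a; b; c]`_i * X i j).
Proof. by rewrite /dg mul_diag_mx; apply/matrixP => i j; rewrite !mxE. Qed.

Lemma det_ut x y z : \det (ut x y z) = 1.
Proof. rewrite det3 !mxE /=; ring. Qed.

Lemma SLO_ut x y z : inO x -> inO y -> inO z -> SLO (ut x y z).
Proof.
move=> Ox Oy Oz; split; last exact: det_ut.
move=> i j; case: (ord3P i) => ->; case: (ord3P j) => ->; rewrite mxE /=;
  by [exact: inO1 | exact: inO0 | ].
Qed.

Lemma det_dg a b c : \det (dg a b c) = a * b * c.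
Proof. rewrite det3 /dg !mxE /=; ring. Qed.

Lemma SLO_dg a b c : inO a -> inO b -> inO c -> a * b * c = 1 -> SLO (dg a b c).
Proof.
move=> Oa Ob Oc E; split; last by rewrite det_dg.
move=> i j; case: (ord3P i) => ->; case: (ord3P j) => ->; rewrite /dg !mxE /=;
  by [exact: inO0 | ].
Qed.

Lemma cong0 x : inO x -> congO 3 (x * 3) 0.
Proof. by move=> Ox; exists x; split => //; rewrite subr0. Qed.

Lemma Gamma_ut x y z : inO x -> inO y -> inO z -> Gamma_inf3 (ut (x * 3) (y * 3) (z * 3)).
Proof.
move=> Ox Oy Oz; have O3 : inO 3 by exact: inO_nat 3.
split; last split.
- split; first by apply: SLO_ut; apply: inOM.
  have c0 : congO 3 0 0 by exists 0; split; [exact: inO0 | rewrite subr0 mul0r].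
  have c1 : congO 3 1 1 by exists 0; split; [exact: inO0 | rewrite subrr mul0r].
  move=> i j; case: (ord3P i) => ->; case: (ord3P j) => ->; rewrite mxE /=;
  by [exact: cong0 | ].
- by move=> i; rewrite mxE eqxx.
- move=> i j; case: (ord3P i) => ->; case: (ord3P j) => -> //=; by rewrite mxE.
Qed.

Lemma Gamma_utE g : Gamma_inf3 g -> g = ut (g o0 o1) (g o0 o2) (g o1 o2).
Proof.
move=> [_ [D L]].
apply/matrixP => i j; case: (ord3P i) => ->; case: (ord3P j) => ->; rewrite mxE /= ?D //; by rewrite L.
Qed.

Lemma phi2_r0 (M : 'M[algC]_2) (X : 'M[algC]_3) (c : 'I_3) : (phi2 M *m X) o0 c = X o0 c.
Proof. rewrite !mxE sum3 !mxE /=; ring. Qed.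
Lemma phi2_r1 (M : 'M[algC]_2) (X : 'M[algC]_3) (c : 'I_3) : (phi2 M *m X) o1 c = M p0 p0 * X o1 c + M p0 p1 * X o2 c.
Proof. rewrite !mxE sum3 !mxE /= inord0 inord1; ring. Qed.
Lemma phi2_r2 (M : 'M[algC]_2) (X : 'M[algC]_3) (c : 'I_3) : (phi2 M *m X) o2 c = M p1 p0 * X o1 c + M p1 p1 * X o2 c.
Proof. rewrite !mxE sum3 !mxE /= inord0 inord1; ring. Qed.
Lemma phi1_r0 (M : 'M[algC]_2) (X : 'M[algC]_3) (c : 'I_3) : (phi1 M *m X) o0 c = M p0 p0 * X o0 c + M p0 p1 * X o1 c.
Proof. rewrite !mxE sum3 !mxE /= inord0 inord1; ring. Qed.
Lemma phi1_r1 (M : 'M[algC]_2) (X : 'M[algC]_3) (c : 'I_3) : (phi1 M *m X) o1 c = M p1 p0 * X o0 c + M p1 p1 * X o1 c.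
Proof. rewrite !mxE sum3 !mxE /= inord0 inord1; ring. Qed.
Lemma phi1_r2 (M : 'M[algC]_2) (X : 'M[algC]_3) (c : 'I_3) : (phi1 M *m X) o2 c = X o2 c.
Proof. rewrite !mxE sum3 !mxE /=; ring. Qed.

Lemma phi2K (y : 'M[algC]_2) (X : 'M[algC]_3) : SLO y -> phi2 (invmx y) *m (phi2 y *m X) = X.
Proof. by move=> S; rewrite mulmxA -phi2M mulVSLO // phi2_1 mul1mx. Qed.
Lemma phi1K (y : 'M[algC]_2) (X : 'M[algC]_3) : SLO y -> phi1 (invmx y) *m (phi1 y *m X) = X.
Proof. by move=> S; rewrite mulmxA -phi1M mulVSLO // phi1_1 mul1mx. Qed.
Lemma phi2Kv (y : 'M[algC]_2) (X : 'M[algC]_3) : SLO y -> phi2 y *m (phi2 (invmx y) *m X) = X.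
Proof. by move=> S; rewrite mulmxA -phi2M mulSLOV // phi2_1 mul1mx. Qed.
Lemma phi1Kv (y : 'M[algC]_2) (X : 'M[algC]_3) : SLO y -> phi1 y *m (phi1 (invmx y) *m X) = X.
Proof. by move=> S; rewrite mulmxA -phi1M mulSLOV // phi1_1 mul1mx. Qed.

Lemma inO_SLO n (X : 'M[algC]_n) i j : SLO X -> inO (X i j).
Proof. by case=> h _; exact: h. Qed.

Lemma cover Rc Ra A : reps_units Rc -> reps_mod Rc Ra -> Delta11 A ->
  exists y1 y2 y3 d u, index_ok Rc Ra y1 y2 y3 d u /\ cell y1 y2 y3 d u A.
Proof.
move=> HU HM [SA mA].
have [y1 [Y1 [K1 _]]] := @exists_y Rc Ra (A o1 o0) (A o2 o0) HU HM (inO_SLO _ _ o1 o0 SA) (inO_SLO _ _ o2 o0 SA).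
have S1 := SLO_Y _ _ _ Y1.
set A1 := phi2 y1 *m A.
have SA1 : SLO A1 by apply: SLO_mul => //; apply: SLO_phi2.
have A1_20 : A1 o2 o0 = 0 by rewrite /A1 phi2_r2.
have mA1 : minor A1 = minor A by rewrite /A1 minor_phi2 S1.2 mul1r.
have A1n : A1 o1 o0 * A1 o2 o1 != 0 by move: mA; rewrite -/(minor A) -mA1 /minor A1_20 mulr0 subr0.
have A1_10 : A1 o1 o0 != 0 by apply: contraNneq A1n => ->; rewrite mul0r.
have A1_21 : A1 o2 o1 != 0 by apply: contraNneq A1n => ->; rewrite mulr0.
have [y2 [Y2 [K2 N2]]] := @exists_y Rc Ra (A1 o0 o0) (A1 o1 o0) HU HM (inO_SLO _ _ o0 o0 SA1) (inO_SLO _ _ o1 o0 SA1).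
have S2 := SLO_Y _ _ _ Y2.
set A2 := phi1 y2 *m A1.
have SA2 : SLO A2 by apply: SLO_mul => //; apply: SLO_phi1.
have A2_10 : A2 o1 o0 = 0 by rewrite /A2 phi1_r1.
have A2_20 : A2 o2 o0 = 0 by rewrite /A2 phi1_r2.
have A2_21 : A2 o2 o1 != 0 by rewrite /A2 phi1_r2.
have [y3 [Y3 [K3 N3]]] := @exists_y Rc Ra (A2 o1 o1) (A2 o2 o1) HU HM (inO_SLO _ _ o1 o1 SA2) (inO_SLO _ _ o2 o1 SA2).
have S3 := SLO_Y _ _ _ Y3.
set B := phi2 y3 *m A2.
have SB : SLO B by apply: SLO_mul => //; apply: SLO_phi2.
have B21 : B o2 o1 = 0 by rewrite /B phi2_r2.
have B10 : B o1 o0 = 0 by rewrite /B phi2_r1 A2_10 A2_20; ring.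
have B20 : B o2 o0 = 0 by rewrite /B phi2_r2 A2_10 A2_20; ring.
have dB : B o0 o0 * B o1 o1 * B o2 o2 = 1.
  by case: SB => _; rewrite det3 B21 B10 B20 => <-; ring.
have OB : forall i j, inO (B i j) by case: SB.
have EB : phi2 (invmx y3) *m B = A2 by rewrite /B phi2K.
have EA2 : phi1 (invmx y2) *m A2 = A1 by rewrite /A2 phi1K.
have EA1 : phi2 (invmx y1) *m A1 = A by rewrite /A1 phi2K.
clearbody B.
set x := B o0 o1 * (B o1 o1 * B o2 o2).
set y := B o0 o2 * (B o1 o1 * B o2 o2).
set z := B o1 o2 * (B o0 o0 * B o2 o2).
have Ox : inO x by apply: inOM => //; apply: inOM.
have Oy : inO y by apply: inOM => //; apply: inOM.
have Oz : inO z by apply: inOM => //; apply: inOM.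
have [al [Dal [kx [Okx Ex]]]] := digit_exists _ Ox.
have [ga [Dga [kz [Okz Ez]]]] := digit_exists _ Oz.
have Dig : forall t, digit3 t -> inO t.
  move=> t [a [b ->]]; apply: inOD; first exact: inO_nat.
  by apply: inOM; [exact: inO_nat | exact: inO_omega].
have Oyy : inO (y - al * (z - ga)) by apply: inOB => //; apply: inOM; [exact: Dig | apply: inOB => //; exact: Dig].
have [be [Dbe [ky [Oky Ey]]]] := digit_exists _ Oyy.
exists y1, y2, y3, (dg (B o0 o0) (B o1 o1) (B o2 o2)), (ut al be ga).
split.
  split; first exact: Y1. split; first exact: Y2. split; first exact: Y3.
  split; first exact: N2 A1_10. split; first exact: N3 A2_21.
  split; first by exists (B o0 o0), (B o1 o1), (B o2 o2).
  by exists al, be, ga.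
exists (ut (kx * 3) (ky * 3) (kz * 3)); split; first exact: Gamma_ut.
rewrite -!mulmxA ut_mul.
have -> : dg (B o0 o0) (B o1 o1) (B o2 o2) *m
    ut (al + kx * 3) (be + al * (kz * 3) + ky * 3) (ga + kz * 3) = B.
  rewrite dg_mul; apply/matrixP => i j.
  have ex : al + kx * 3 = x by rewrite -Ex; ring.
  have ez : ga + kz * 3 = z by rewrite -Ez; ring.
  have ey : be + al * (kz * 3) + ky * 3 = y by rewrite -Ez -Ey; ring.
  case: (ord3P i) => ->; case: (ord3P j) => ->; rewrite !mxE /= ?ex ?ey ?ez ?B10 ?B20 ?B21 ?mulr1 ?mulr0 //.
  - by rewrite /x -[RHS]mulr1 -dB; ring.
  - by rewrite /y -[RHS]mulr1 -dB; ring.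
  - by rewrite /z -[RHS]mulr1 -dB; ring.
by rewrite EB EA2 EA1.
Qed.

Lemma minor_Q (z w : 'M[algC]_2) (X : 'M[algC]_3) : X o1 o0 = 0 -> X o2 o0 = 0 -> X o2 o1 = 0 ->
  minor (phi1 z *m (phi2 w *m X)) = z p1 p0 * w p1 p0 * X o0 o0 * X o1 o1.
Proof.
move=> h10 h20 h21.
rewrite /minor !phi1_r1 !phi1_r2 ?phi1_r0 ?phi2_r0 !phi2_r1 !phi2_r2 h10 h20 h21; ring.
Qed.

Definition cellform (y1 y2 y3 : 'M[algC]_2) (X : 'M[algC]_3) :=
  phi2 (invmx y1) *m (phi1 (invmx y2) *m (phi2 (invmx y3) *m X)).

Lemma cell_form Rc Ra y1 y2 y3 d u A : index_ok Rc Ra y1 y2 y3 d u -> cell y1 y2 y3 d u A ->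
  exists i j k al be ga gx gy gz,
    [/\ [/\ inO i, inO j, inO k & i * j * k = 1], d = dg i j k, u = ut al be ga,
        [/\ digit3 al, digit3 be & digit3 ga] &
        [/\ congO 3 gx 0, congO 3 gy 0 , congO 3 gz 0 & [/\ inO gx, inO gy & inO gz]]] /\
    A = cellform y1 y2 y3 (dg i j k *m ut (al + gx) (be + al * gz + gy) (ga + gz)).
Proof.
move=> [_ [_ [_ [_ [_ [[i [j [k [Oi [Oj [Ok [E ->]]]]]]] [al [be [ga [Dal [Dbe [Dga ->]]]]]]]]]]]].
move=> [g [G ->]].
exists i, j, k, al, be, ga, (g o0 o1), (g o0 o2), (g o1 o2).
split.
  split => //.
  have [[Sg Cg] _] := G.
  split.
  - by have := Cg o0 o1.
  - by have := Cg o0 o2.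
  - by have := Cg o1 o2.
  - by split; apply: (inO_SLO _ _ _ _ Sg).
rewrite /cellform -!mulmxA -ut_mul -(Gamma_utE _ G) //.
Qed.

Section DGUT.
Variables (i j k a b c : algC).
Let X := dg i j k *m ut a b c.
Lemma dgut10 : X o1 o0 = 0. Proof. by rewrite /X dg_mul !mxE /= mulr0. Qed.
Lemma dgut20 : X o2 o0 = 0. Proof. by rewrite /X dg_mul !mxE /= mulr0. Qed.
Lemma dgut21 : X o2 o1 = 0. Proof. by rewrite /X dg_mul !mxE /= mulr0. Qed.
Lemma dgut00 : X o0 o0 = i. Proof. by rewrite /X dg_mul !mxE /= mulr1. Qed.
Lemma dgut11 : X o1 o1 = j. Proof. by rewrite /X dg_mul !mxE /= mulr1. Qed.
Lemma dgut22 : X o2 o2 = k. Proof. by rewrite /X dg_mul !mxE /= mulr1. Qed.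
Lemma dgut01 : X o0 o1 = i * a. Proof. by rewrite /X dg_mul !mxE /=. Qed.
Lemma dgut02 : X o0 o2 = i * b. Proof. by rewrite /X dg_mul !mxE /=. Qed.
Lemma dgut12 : X o1 o2 = j * c. Proof. by rewrite /X dg_mul !mxE /=. Qed.
End DGUT.

Lemma digit_inO t : digit3 t -> inO t.
Proof.
move=> [a [b ->]]; apply: inOD; first exact: inO_nat.
by apply: inOM; [exact: inO_nat | exact: inO_omega].
Qed.

Lemma inv2_10 y : SLO y -> invmx y p1 p0 = - y p1 p0.
Proof. by move=> [_ d]; rewrite inv2 // mxE. Qed.

Lemma cell_delta Rc Ra y1 y2 y3 d u A : reps_units Rc ->
  index_ok Rc Ra y1 y2 y3 d u -> cell y1 y2 y3 d u A -> Delta11 A.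
Proof.
move=> HU I C.
have [i [j [k [al [be [ga [gx [gy [gz [[[Oi Oj Ok E] _ _ [Dal Dbe Dga] [_ _ _ [Ox Oy Oz]]] ->]]]]]]]]]] :=
  cell_form _ _ _ _ _ _ _ _ I C.
case: I => Y1 [Y2 [Y3 [N2 [N3 _]]]].
have S1 := SLO_Y _ _ _ Y1; have S2 := SLO_Y _ _ _ Y2; have S3 := SLO_Y _ _ _ Y3.
split.
  rewrite /cellform.
  apply: SLO_mul; first by apply: SLO_phi2; apply: SLO_inv2.
  apply: SLO_mul; first by apply: SLO_phi1; apply: SLO_inv2.
  apply: SLO_mul; first by apply: SLO_phi2; apply: SLO_inv2.
  apply: SLO_mul; first exact: SLO_dg.
  have Oal := digit_inO _ Dal; have Obe := digit_inO _ Dbe; have Oga := digit_inO _ Dga.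
  apply: SLO_ut; apply: inOD => //; try apply: inOD => //; apply: inOM => //.
rewrite -/(minor _) /cellform minor_phi2 (SLO_inv2 _ S1).2 mul1r minor_Q ?dgut10 ?dgut20 ?dgut21 //.
rewrite dgut00 dgut11 !inv2_10 //.
have n2 := Rc_ne0 _ _ _ HU Y2 N2; have n3 := Rc_ne0 _ _ _ HU Y3 N3.
have ni : i != 0 by apply: contra_eq_neq E => ->; rewrite !mul0r eq_sym oner_neq0.
have nj : j != 0 by apply: contra_eq_neq E => ->; rewrite mulr0 mul0r eq_sym oner_neq0.
by do 3 (apply: mulf_neq0 => //); rewrite oppr_eq0.
Qed.

Lemma phi2_conj {y y' : 'M[algC]_2} {A B B' : 'M[algC]_3} : SLO y ->
  A = phi2 (invmx y) *m B -> A = phi2 (invmx y') *m B' -> SLO y' ->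
  phi2 (y' *m invmx y) *m B = B'.
Proof.
move=> S E E' S'.
by rewrite phi2M -mulmxA -E E' phi2Kv.
Qed.
Lemma phi1_conj {y y' : 'M[algC]_2} {A B B' : 'M[algC]_3} : SLO y ->
  A = phi1 (invmx y) *m B -> A = phi1 (invmx y') *m B' -> SLO y' ->
  phi1 (y' *m invmx y) *m B = B'.
Proof.
move=> S E E' S'.
by rewrite phi1M -mulmxA -E E' phi1Kv.
Qed.

Lemma phi2_inj {y : 'M[algC]_2} {B B' : 'M[algC]_3} : SLO y ->
  phi2 (invmx y) *m B = phi2 (invmx y) *m B' -> B = B'.
Proof. by move=> S E; rewrite -(phi2Kv y B S) E phi2Kv. Qed.
Lemma phi1_inj {y : 'M[algC]_2} {B B' : 'M[algC]_3} : SLO y ->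
  phi1 (invmx y) *m B = phi1 (invmx y) *m B' -> B = B'.
Proof. by move=> S E; rewrite -(phi1Kv y B S) E phi1Kv. Qed.

Lemma disj Rc Ra y1 y2 y3 d u y1' y2' y3' d' u' A : reps_units Rc -> reps_mod Rc Ra ->
  index_ok Rc Ra y1 y2 y3 d u -> index_ok Rc Ra y1' y2' y3' d' u' ->
  cell y1 y2 y3 d u A -> cell y1' y2' y3' d' u' A ->
  [/\ y1 = y1', y2 = y2', y3 = y3', d = d' & u = u'].
Proof.
move=> HU HM I I' C C'.
have [i [j [k [al [be [ga [gx [gy [gz [[[Oi Oj Ok E] -> -> [Dal Dbe Dga] [Cx Cy Cz [Ox Oy Oz]]] EA]]]]]]]]]] :=
  cell_form _ _ _ _ _ _ _ _ I C.
have [i' [j' [k' [al' [be' [ga' [gx' [gy' [gz' [[[Oi' Oj' Ok' E'] -> -> [Dal' Dbe' Dga'] [Cx' Cy' Cz' [Ox' Oy' Oz']]] EA']]]]]]]]]] :=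
  cell_form _ _ _ _ _ _ _ _ I' C'.
case: I => Y1 [Y2 [Y3 [N2 [N3 _]]]].
case: I' => Y1' [Y2' [Y3' [N2' [N3' _]]]].
have S1 := SLO_Y _ _ _ Y1; have S2 := SLO_Y _ _ _ Y2; have S3 := SLO_Y _ _ _ Y3.
have S1' := SLO_Y _ _ _ Y1'; have S2' := SLO_Y _ _ _ Y2'; have S3' := SLO_Y _ _ _ Y3'.
have ni : i != 0 by apply: contra_eq_neq E => ->; rewrite !mul0r eq_sym oner_neq0.
have nj : j != 0 by apply: contra_eq_neq E => ->; rewrite mulr0 mul0r eq_sym oner_neq0.
set X := dg i j k *m _ in EA.
set X' := dg i' j' k' *m _ in EA'.
rewrite /cellform in EA EA'.
have e1 := phi2_conj S1 EA EA' S1'.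
have e1' := congr1 (fun M : 'M[algC]_3 => M o2 o0) e1; simpl in e1'.
move: e1'; rewrite phi2_r2 !phi1_r2 !phi2_r2 !phi1_r1 !phi2_r0 !phi2_r1 /X /X' !dgut10 !dgut20 !dgut00.
move=> e1'.
have m1 : (y1' *m invmx y1) p1 p0 = 0.
  have h : (y1' *m invmx y1) p1 p0 * (invmx y2 p1 p0 * i) = 0.
    by apply: (etrans _ (etrans e1' _)); ring.
  move/eqP: h; rewrite !mulf_eq0 inv2_10 // oppr_eq0 (negbTE (Rc_ne0 _ _ _ HU Y2 N2)) (negbTE ni) /=.
  by rewrite orbF => /eqP.
have Ey1 := Y_uniq _ _ _ _ HU HM Y1 Y1' m1.
subst y1'.
have EA1 := phi2_inj S1 (etrans (esym EA) EA').
have e2 := phi1_conj S2 (erefl _) EA1 S2'.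
have e2' := congr1 (fun M : 'M[algC]_3 => M o1 o0) e2; simpl in e2'.
move: e2'; rewrite phi1_r1 !phi2_r0 !phi2_r1 /X /X' !dgut10 !dgut20 !dgut00 => e2'.
have m2 : (y2' *m invmx y2) p1 p0 = 0.
  have h : (y2' *m invmx y2) p1 p0 * i = 0.
    by apply: (etrans _ (etrans e2' _)); ring.
  by move/eqP: h; rewrite mulf_eq0 (negbTE ni) orbF => /eqP.
have Ey2 := Y_uniq _ _ _ _ HU HM Y2 Y2' m2.
subst y2'.
have EA2 := phi1_inj S2 EA1.
have e3 := phi2_conj S3 (erefl _) EA2 S3'.
have e3' := congr1 (fun M : 'M[algC]_3 => M o2 o1) e3; simpl in e3'.
move: e3'; rewrite phi2_r2 /X /X' !dgut21 !dgut11 => e3'.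
have m3 : (y3' *m invmx y3) p1 p0 = 0.
  have h : (y3' *m invmx y3) p1 p0 * j = 0.
    by apply: (etrans _ (etrans e3' _)); ring.
  by move/eqP: h; rewrite mulf_eq0 (negbTE nj) orbF => /eqP.
have Ey3 := Y_uniq _ _ _ _ HU HM Y3 Y3' m3.
subst y3'.
have EX := phi2_inj S3 EA2.
have ent : forall r c, X r c = X' r c by move=> r c; rewrite EX.
have ei : i = i' by have := ent o0 o0; rewrite /X /X' !dgut00.
have ej : j = j' by have := ent o1 o1; rewrite /X /X' !dgut11.
have ek : k = k' by have := ent o2 o2; rewrite /X /X' !dgut22.
subst i' j' k'.
have ea : al + gx = al' + gx' by apply: (mulfI ni); have := ent o0 o1; rewrite /X /X' !dgut01.
have ec : ga + gz = ga' + gz' by apply: (mulfI nj); have := ent o1 o2; rewrite /X /X' !dgut12.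
have eb : be + al * gz + gy = be' + al' * gz' + gy' by apply: (mulfI ni); have := ent o0 o2; rewrite /X /X' !dgut02.
case: Cx => [kx [Okx Ex]]; case: Cx' => [kx' [Okx' Ex']].
case: Cy => [ky [Oky Ey]]; case: Cy' => [ky' [Oky' Ey']].
case: Cz => [kz [Okz Ez]]; case: Cz' => [kz' [Okz' Ez']].
rewrite !subr0 in Ex Ex' Ey Ey' Ez Ez'.
have Eal : al = al'.
  apply: digit_uniq Dal Dal' _; exists (kx' - kx); split; first exact: inOB.
  have -> : al - al' = gx' - gx by rewrite -[al](addrK gx) ea; ring.
  by rewrite Ex Ex'; ring.
subst al'.
have Ega : ga = ga'.
  apply: digit_uniq Dga Dga' _; exists (kz' - kz); split; first exact: inOB.
  have -> : ga - ga' = gz' - gz by rewrite -[ga](addrK gz) ec; ring.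
  by rewrite Ez Ez'; ring.
subst ga'.
have Ebe : be = be'.
  apply: digit_uniq Dbe Dbe' _; exists (al * (kz' - kz) + (ky' - ky)); split.
    by apply: inOD; [apply: inOM; [exact: digit_inO | exact: inOB] | exact: inOB].
  have -> : be - be' = al * (gz' - gz) + (gy' - gy) by rewrite -[be](addrK (al * gz + gy)) addrA eb; ring.
  by rewrite Ez Ez' Ey Ey'; ring.
by subst be'.
Qed.

Theorem theorem2p16 (Rc : algC -> Prop) (Ra : algC -> algC -> Prop) :
  reps_units Rc -> reps_mod Rc Ra ->
  (forall A : 'M[algC]_3, Delta11 A <->
     exists y1 y2 y3 d u, index_ok Rc Ra y1 y2 y3 d u /\ cell y1 y2 y3 d u A) /\
  (forall y1 y2 y3 d u y1' y2' y3' d' u' (A : 'M[algC]_3),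
     index_ok Rc Ra y1 y2 y3 d u -> index_ok Rc Ra y1' y2' y3' d' u' ->
     cell y1 y2 y3 d u A -> cell y1' y2' y3' d' u' A ->
     [/\ y1 = y1', y2 = y2', y3 = y3', d = d' & u = u']).
Proof.
move=> HU HM; split.
  move=> A; split; first exact: cover.
  by move=> [y1 [y2 [y3 [d [u [I C]]]]]]; apply: (cell_delta _ _ _ _ _ _ _ _ HU I C).
move=> y1 y2 y3 d u y1' y2' y3' d' u' A I I' C C'.
exact: (disj _ _ _ _ _ _ _ _ _ _ _ _ _ HU HM I I' C C').
Qed.
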